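(* For every positive integer $n$, as an identity of rational functions in $x$, $$\sum_{k=1}^n\binom{x}{k}\binom{-x}{k}H_k^{(2)}=-\frac{1}{x^2}+\binom{x-1}{n}\binom{-x-1}{n}\left(\frac{1}{x^2}+H_n^{(2)}\right).$$
   Context: $\binom{x}{k}=x(x-1)\cdots(x-k+1)/k!$ for an indeterminate $x$ and integer $k\ge0$. $H_n^{(2)}=\sum_{j=1}^n j^{-2}$. *)

(* Defs.v *)
From mathcomp Require Import all_boot all_order all_algebra.
From mathcomp Require Import fraction.
Set Implicit Arguments. Unset Strict Implicit. Unset Printing Implicit Defensive.
Import Order.TTheory GRing.Theory Num.Theory.
Local Open Scope ring_scope.

Definition gbinom (F : fieldType) (x : F) (k : nat) : F :=
  (\prod_(i < k) (x - i%:R)) / (k`!)%:R.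

Definition H2 (F : fieldType) (n : nat) : F :=
  \sum_(1 <= j < n.+1) ((j%:R) ^+ 2)^-1.

Definition ratfun := {fraction {poly rat}}.
Definition xF : ratfun := tofrac 'X.

(* Main.v *)
Require Import Defs.
From mathcomp Require Import all_boot all_order all_algebra.
From mathcomp Require Import fraction ring lra.
Import GRing.Theory.
Local Open Scope ring_scope.

Section G.
Variable F : fieldType.
Hypothesis hc : forall k, (k.+1)%:R != 0 :> F.

Lemma gbS (y : F) n : gbinom y n.+1 = gbinom y n * (y - n%:R) / (n.+1)%:R.
Proof.
rewrite /gbinom big_ord_recr /= factS natrM.
have := hc n; have : (n`!)%:R != 0 :> F.
  by case: n`! (fact_gt0 n) => // k _; apply: hc.
move=> h1 h2; field; rewrite ?[1 + _]addrC ?natr1 ?h1 ?h2 ?hx ?hn ?andbT //.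
Qed.

Lemma gbL (y : F) n : gbinom y n.+1 = y * gbinom (y - 1) n / (n.+1)%:R.
Proof.
rewrite /gbinom big_ord_recl /= factS natrM subr0.
have := hc n; have : (n`!)%:R != 0 :> F.
  by case: n`! (fact_gt0 n) => // k _; apply: hc.
move=> h1 h2.
have -> : \prod_(i < n) (y - (bump 0 i)%:R) = \prod_(i < n) (y - 1 - i%:R).
  by apply: eq_bigr => i _; rewrite /bump /= add1n -addn1 natrD opprD addrA addrC addrA [_ + y]addrC.
field; rewrite ?[1 + _]addrC ?natr1 ?h1 ?h2 ?hx ?hn ?andbT //.
Qed.

Lemma H2S n : H2 F n.+1 = H2 F n + ((n.+1)%:R ^+ 2)^-1.
Proof. by rewrite /H2 big_nat_recr. Qed.

Lemma gen (x : F) (hx : x != 0) n :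
  \sum_(1 <= k < n.+1) gbinom x k * gbinom (- x) k * H2 F k
  = - (x ^+ 2)^-1
    + gbinom (x - 1) n * gbinom (- x - 1) n * ((x ^+ 2)^-1 + H2 F n).
Proof.
elim: n => [|n IH].
  rewrite big_geq // /gbinom !big_ord0 /H2 big_geq //= divr1; field; rewrite ?[1 + _]addrC ?natr1 ?h1 ?h2 ?hx ?hn ?andbT //.
rewrite big_nat_recr //= IH gbL gbL (gbS (x - 1)) (gbS (- x - 1)) H2S.
have := hc n; move=> hn.
field; rewrite ?[1 + _]addrC ?natr1 ?h1 ?h2 ?hx ?hn ?andbT //.
Qed.
End G.

Theorem lemma2p1 (n : nat) (hn : (0 < n)%N) :
  \sum_(1 <= k < n.+1) gbinom xF k * gbinom (- xF) k * H2 ratfun k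
  = - (xF ^+ 2)^-1
    + gbinom (xF - 1) n * gbinom (- xF - 1) n * ((xF ^+ 2)^-1 + H2 ratfun n).
Proof.
apply: gen.
  move=> k; have -> : k.+1%:R = tofrac (k.+1%:R : {poly rat}) by rewrite rmorph_nat.
  by rewrite tofrac_eq0 -polyC_natr polyC_eq0 Num.Theory.pnatr_eq0.
by rewrite /xF tofrac_eq0 polyX_eq0.
Qed.
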